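(* Let $\mathfrak S=(S,\xrightarrow{F},\le)$ be a complete WSTS and $s_0\in S$. Then $Clover_{\mathfrak S}(s_0)$ is finite, and $cl(Cover_{\mathfrak S}(s_0))=\downarrow Clover_{\mathfrak S}(s_0)$.
   Context: A complete WSTS is a functional transition system $(S,\xrightarrow{F},\le)$ ($F$ finite set of partial maps; $s\to f(s)$ when $s\in\operatorname{dom}f$) such that $(S,\le)$ is a well partial order (well-founded, no infinite antichain), a dcpo (every directed subset $D$ has a lub $\bigvee D$) which is continuous (for each $x$, $\{y\mid y\ll x\}$ is directed with lub $x$; $y\ll x$ iff every directed $D$ with $x\le\bigvee D$ has an element above $y$), and every $f\in F$ is partial continuous: its domain is Scott-open and $f(\bigvee D)=\bigvee f(D)$ for every directed $D\subseteq\operatorname{dom}f$. Scott-open: upward-closed $U$ such that every directed $D$ with $\bigvee D\in U$ meets $U$; $cl(A)$ is the smallest Scott-closed (complement of Scott-open) set containing $A$. $Cover_{\mathfrak S}(s_0)=\downarrow Post^*(\downarrow s_0)$ where $Post^*$ is the reachability (reflexive-transitive) closure; $\operatorname{Lub}(E)=\{\bigvee D\mid D\subseteq E\text{ directed}\}$; $Clover_{\mathfrak S}(s_0)=\operatorname{Max}\operatorname{Lub}(Cover_{\mathfrak S}(s_0))$, $\operatorname{Max}$ denoting the set of maximal elements. *)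

(* Defs.v *)
From Stdlib Require Import List Relations.
Import ListNotations.

Section WSTS.
Variable S : Type.
Variable le : S -> S -> Prop.

Definition subset (A B : S -> Prop) : Prop := forall x, A x -> B x.

Definition partial_order : Prop :=
  (forall x, le x x) /\
  (forall x y, le x y -> le y x -> x = y) /\
  (forall x y z, le x y -> le y z -> le x z).

Definition lt (x y : S) : Prop := le x y /\ x <> y.

Definition wpo : Prop :=
  partial_order /\
  well_founded lt /\
  ~ (exists a : nat -> S,
        forall i j, i <> j -> ~ le (a i) (a j)).

Definition directed (D : S -> Prop) : Prop :=
  (exists d, D d) /\
  (forall x y, D x -> D y -> exists z, D z /\ le x z /\ le y z).

Definition upper_bound (D : S -> Prop) (u : S) : Prop := forall d, D d -> le d u.

Definition is_lub (D : S -> Prop) (l : S) : Prop :=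
  upper_bound D l /\ forall u, upper_bound D u -> le l u.

Definition dcpo : Prop := forall D, directed D -> exists l, is_lub D l.

Definition way_below (y x : S) : Prop :=
  forall D l, directed D -> is_lub D l -> le x l -> exists d, D d /\ le y d.

Definition continuous_dcpo : Prop :=
  dcpo /\
  forall x, directed (fun y => way_below y x) /\ is_lub (fun y => way_below y x) x.

Definition upward_closed (U : S -> Prop) : Prop :=
  forall x y, U x -> le x y -> U y.

Definition scott_open (U : S -> Prop) : Prop :=
  upward_closed U /\
  forall D l, directed D -> is_lub D l -> U l -> exists d, D d /\ U d.

Definition scott_closed (C : S -> Prop) : Prop :=
  scott_open (fun x => ~ C x).

Definition cl (A : S -> Prop) : S -> Prop :=
  fun x => forall C, scott_closed C -> subset A C -> C x.

(* partial maps are represented as functions S -> option S *)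
Definition dom (f : S -> option S) : S -> Prop := fun s => f s <> None.

Definition image (f : S -> option S) (D : S -> Prop) : S -> Prop :=
  fun y => exists d, D d /\ f d = Some y.

Definition partial_continuous (f : S -> option S) : Prop :=
  scott_open (dom f) /\
  forall D l, directed D -> subset D (dom f) -> is_lub D l ->
    exists fl, f l = Some fl /\ is_lub (image f D) fl.

Definition complete_wsts (F : list (S -> option S)) : Prop :=
  wpo /\ continuous_dcpo /\ (forall f, In f F -> partial_continuous f).

Definition step (F : list (S -> option S)) (s t : S) : Prop :=
  exists f, In f F /\ f s = Some t.

Definition reach (F : list (S -> option S)) : S -> S -> Prop :=
  clos_refl_trans S (step F).

Definition down (A : S -> Prop) : S -> Prop := fun x => exists a, A a /\ le x a.

Definition Post_star (F : list (S -> option S)) (A : S -> Prop) : S -> Prop :=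
  fun y => exists x, A x /\ reach F x y.

Definition Cover (F : list (S -> option S)) (s0 : S) : S -> Prop :=
  down (Post_star F (down (fun x => x = s0))).

Definition Lub (E : S -> Prop) : S -> Prop :=
  fun l => exists D, subset D E /\ directed D /\ is_lub D l.

Definition Max (A : S -> Prop) : S -> Prop :=
  fun x => A x /\ forall y, A y -> le x y -> y = x.

Definition Clover (F : list (S -> option S)) (s0 : S) : S -> Prop :=
  Max (Lub (Cover F s0)).

Definition finite_set (A : S -> Prop) : Prop :=
  exists l : list S, forall x, A x -> In x l.

End WSTS.

(* Main.v *)
Require Import Defs.
From Stdlib Require Import List Relations.
From Stdlib Require Import Classical ClassicalEpsilon Lia PeanoNat.
Import ListNotations.

Definition choose {A} {P : A -> Prop} (h : exists x, P x) : A :=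
  proj1_sig (constructive_indefinite_description P h).
Lemma choose_spec {A} {P : A -> Prop} (h : exists x, P x) : P (choose h).
Proof. unfold choose. destruct (constructive_indefinite_description P h); auto. Qed.

Lemma incr_mono (g : nat -> nat) : (forall k, g k < g (Datatypes.S k)) ->
  (forall k k', k < k' -> g k < g k') /\ (forall k, k <= g k).
Proof.
  intros H. split.
  - intros k k' Hk. induction Hk. apply H. specialize (H m). lia.
  - induction k. lia. specialize (H k). lia.
Qed.

Section Proof.
Variable T : Type.
Variable le : T -> T -> Prop.
Hypothesis refl : forall x, le x x.
Hypothesis antisym : forall x y, le x y -> le y x -> x = y.
Hypothesis trans : forall x y z, le x y -> le y z -> le x z.
Hypothesis wf : well_founded (lt T le).
Hypothesis noanti : ~ (exists a : nat -> T, forall i j, i <> j -> ~ le (a i) (a j)).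
Hypothesis hdcpo : dcpo T le.

Lemma wf_min (P : T -> Prop) : (exists x, P x) -> exists x, P x /\ forall y, P y -> ~ lt T le y x.
Proof.
  intros [x Hx]. revert Hx. induction x as [x IH] using (well_founded_ind wf).
  intros Hx. destruct (classic (exists y, P y /\ lt T le y x)) as [[y [Hy Hlt]]|Hn].
  - exact (IH y Hlt Hy).
  - exists x. split; auto. intros y Hy Hlt. apply Hn; eauto.
Qed.

Definition bad (a : nat -> T) := forall i j, i < j -> ~ le (a i) (a j).
Definition Bp (a : nat -> T) i := forall N, exists j, N <= j /\ i < j /\ lt T le (a j) (a i).

Lemma noB_anti a : bad a -> (forall i, ~ Bp a i) -> False.
Proof.
  intros Hbad HB.
  assert (H : forall i, exists N, forall j, N <= j -> i < j -> ~ lt T le (a j) (a i)).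
  { intro i. specialize (HB i). unfold Bp in HB. apply NNPP. intro C. apply HB. intro N.
    apply NNPP; intro C2. apply C. exists N. intros j h1 h2 h3. apply C2. eauto. }
  set (N := fun i => choose (H i)).
  assert (HN : forall i j, N i <= j -> i < j -> ~ lt T le (a j) (a i)).
  { intros i. exact (choose_spec (H i)). }
  set (Nm := fix Nm (i : nat) : nat := match i with 0 => N 0 | Datatypes.S i' => Nat.max (N (Datatypes.S i')) (Nm i') end).
  assert (HNm : forall i k, k <= i -> N k <= Nm i).
  { induction i; intros k Hk.
    - assert (k = 0) by lia. subst. simpl. lia.
    - simpl. destruct (Nat.eq_dec k (Datatypes.S i)). subst. lia.
      specialize (IHi k ltac:(lia)). lia. }
  set (h := fix h (n : nat) : nat := match n with 0 => 0 | Datatypes.S n' => Datatypes.S (h n' + Nm (h n')) end).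
  assert (Hh : forall k, h k < h (Datatypes.S k)) by (intro k; simpl; lia).
  destruct (incr_mono h Hh) as [Hmono _].
  assert (HhN : forall n m, n < m -> N (h n) <= h m).
  { intros n m Hnm. assert (N (h n) <= h (Datatypes.S n)).
    { simpl. specialize (HNm (h n) (h n) (le_n _)). lia. }
    destruct (Nat.eq_dec m (Datatypes.S n)). subst; auto.
    specialize (Hmono (Datatypes.S n) m ltac:(lia)). lia. }
  apply noanti. exists (fun n => a (h n)). intros i j Hij.
  destruct (Nat.lt_gt_cases i j) as [[Hl|Hl] _]; [exact Hij| |].
  - apply Hbad. auto.
  - intro Hle. destruct (classic (a (h i) = a (h j))) as [He|He].
    + apply (Hbad (h j) (h i)); auto. rewrite He. apply refl.
    + apply (HN (h j) (h i)); auto. split; auto.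
Qed.

Lemma good a : bad a -> False.
Proof.
  intros Hbad.
  destruct (classic (exists i, Bp a i)) as [[i0 Hi0]|Hn].
  2: { apply (noB_anti a Hbad). intros i Hi; apply Hn; eauto. }
  destruct (wf_min (fun x => exists i, a i = x /\ Bp a i)) as [x [[i [Hai HBi]] Hmin]]; [eauto|].
  set (nx := fun n => choose (HBi n)).
  assert (Hnx : forall n, n <= nx n /\ i < nx n /\ lt T le (a (nx n)) (a i)).
  { intro n. exact (choose_spec (HBi n)). }
  set (g := fix g (k : nat) : nat := match k with 0 => nx 0 | Datatypes.S k' => nx (Datatypes.S (g k')) end).
  assert (Hg : forall k, g k < g (Datatypes.S k)).
  { intro k. simpl. destruct (Hnx (Datatypes.S (g k))). lia. }
  assert (HgM : forall k, lt T le (a (g k)) (a i)).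
  { intro k. destruct k; simpl; apply Hnx. }
  destruct (incr_mono g Hg) as [Hmono Hge].
  apply (noB_anti (fun k => a (g k))).
  - intros k k' Hk. apply Hbad. auto.
  - intros k Hk. apply (Hmin (a (g k))).
    + exists (g k). split; auto. intro N. destruct (Hk N) as [k' [H1 [H2 H3]]].
      exists (g k'). specialize (Hge k'). specialize (Hmono k k' H2). split; [lia|split; auto].
    + rewrite <- Hai. auto.
Qed.

Definition downc (E : T -> Prop) := forall x y, E y -> le x y -> E x.
Definition GoodE (E : T -> Prop) := exists L, (forall l, In l L -> Lub T le E l) /\
  (forall D, subset T D E -> directed T le D -> exists l, In l L /\ upper_bound T le D l).

Lemma step E : downc E -> ~ GoodE E -> exists E', downc E' /\ subset T E' E /\
   (exists x, E x /\ ~ E' x) /\ ~ GoodE E'.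
Proof.
  intros Hd HG.
  destruct (classic (directed T le E)) as [Hdir|Hnd].
  - exfalso. apply HG. destruct (hdcpo E Hdir) as [l Hl]. exists [l]. split.
    + intros l' [<-|[]]. exists E. split; [intros x; auto| auto].
    + intros D HDE HD. exists l. split; [left; auto|]. intros d Hd'. apply (proj1 Hl). auto.
  - destruct (classic (exists x, E x)) as [[x0 Hx0]|Hne].
    2: { exfalso. apply HG. exists []. split; [intros l []|]. intros D HDE [[d Hd'] _].
         exfalso; apply Hne; eauto. }
    assert (Hab : exists a b, E a /\ E b /\ ~ exists z, E z /\ le a z /\ le b z).
    { apply NNPP. intro C. apply Hnd. split; [eauto|]. intros x y Hx Hy.
      apply NNPP; intro C2. apply C. exists x, y. auto. }
    destruct Hab as [a [b [Ha [Hb Hnab]]]].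
    set (E1 := fun x => E x /\ ~ le a x). set (E2 := fun x => E x /\ ~ le b x).
    assert (D1 : downc E1).
    { intros x y [Hy Hny] Hxy. split; [eauto|]. intro C; apply Hny; eauto. }
    assert (D2 : downc E2).
    { intros x y [Hy Hny] Hxy. split; [eauto|]. intro C; apply Hny; eauto. }
    destruct (classic (GoodE E1)) as [G1|G1].
    2: { exists E1. split; auto. split. intros x [Hx _]; auto. split; auto.
         exists a. split; auto. intros [_ C]; apply C, refl. }
    destruct (classic (GoodE E2)) as [G2|G2].
    2: { exists E2. split; auto. split. intros x [Hx _]; auto. split; auto.
         exists b. split; auto. intros [_ C]; apply C, refl. }
    exfalso. apply HG. destruct G1 as [L1 [HL1 HL1']]. destruct G2 as [L2 [HL2 HL2']].
    exists (L1 ++ L2). split.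
    + intros l Hl. apply in_app_or in Hl. destruct Hl as [Hl|Hl].
      * destruct (HL1 l Hl) as [D [HD1 HD2]]. exists D. split; auto.
        intros x Hx. exact (proj1 (HD1 x Hx)).
      * destruct (HL2 l Hl) as [D [HD1 HD2]]. exists D. split; auto.
        intros x Hx. exact (proj1 (HD1 x Hx)).
    + intros D HDE HD.
      destruct (classic (subset T D E1)) as [S1|S1].
      * destruct (HL1' D S1 HD) as [l [Hl Hub]]. exists l. split; auto. apply in_or_app; auto.
      * destruct (classic (subset T D E2)) as [S2|S2].
        -- destruct (HL2' D S2 HD) as [l [Hl Hub]]. exists l. split; auto. apply in_or_app; auto.
        -- exfalso.
           assert (Hd1 : exists d1, D d1 /\ le a d1).
           { apply NNPP; intro C. apply S1. intros x Hx. split; auto. intro Hax. apply C; eauto. }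
           assert (Hd2 : exists d2, D d2 /\ le b d2).
           { apply NNPP; intro C. apply S2. intros x Hx. split; auto. intro Hax. apply C; eauto. }
           destruct Hd1 as [d1 [Hd1 Ha1]]. destruct Hd2 as [d2 [Hd2 Hb2]].
           destruct (proj2 HD d1 d2 Hd1 Hd2) as [z [Hz [H1 H2]]].
           apply Hnab. exists z. split; [apply HDE; auto| split; eauto].
Qed.

Lemma all_good E : downc E -> GoodE E.
Proof.
  intros Hd. apply NNPP. intro HG.
  pose (X := {E : T -> Prop | downc E /\ ~ GoodE E}).
  assert (Hs : forall e : X, exists e' : X, subset T (proj1_sig e') (proj1_sig e) /\
                exists x, proj1_sig e x /\ ~ proj1_sig e' x).
  { intros [E0 [H1 H2]]. destruct (step E0 H1 H2) as [E' [H3 [H4 [H5 H6]]]].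
    exists (exist _ E' (conj H3 H6)). simpl. auto. }
  set (nxt := fun e => choose (Hs e)).
  set (sq := fix sq (n : nat) : X := match n with 0 => exist _ E (conj Hd HG)
                                      | Datatypes.S n' => nxt (sq n') end).
  set (Es := fun n => proj1_sig (sq n)).
  assert (Hstep : forall n, subset T (Es (Datatypes.S n)) (Es n) /\
                  exists x, Es n x /\ ~ Es (Datatypes.S n) x).
  { intro n. exact (choose_spec (Hs (sq n))). }
  assert (Hdc : forall n, downc (Es n)). { intro n. exact (proj1 (proj2_sig (sq n))). }
  assert (Hch : forall i k, subset T (Es (Datatypes.S i + k)) (Es (Datatypes.S i))).
  { intros i k. induction k.
    - rewrite Nat.add_0_r. intros x Hx; auto.
    - rewrite Nat.add_succ_r. intros x Hx. apply IHk. apply (proj1 (Hstep _)). auto. }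
  set (a := fun n => choose (proj2 (Hstep n))).
  assert (Ha : forall n, Es n (a n) /\ ~ Es (Datatypes.S n) (a n)).
  { intro n. exact (choose_spec (proj2 (Hstep n))). }
  apply (good a). intros i j Hij Hle.
  assert (HE : Es (Datatypes.S i) (a j)).
  { replace j with (Datatypes.S i + (j - Datatypes.S i)) in * by lia.
    apply (Hch i (j - Datatypes.S i)). apply Ha. }
  apply (proj2 (Ha i)). eapply Hdc; eauto.
Qed.

Lemma dir_ub (L : list T) : forall D, directed T le D ->
  (forall d, D d -> exists m, In m L /\ le d m) -> exists m, In m L /\ upper_bound T le D m.
Proof.
  induction L as [|y L IH]; intros D HD H.
  - destruct HD as [[d Hd] _]. destruct (H d Hd) as [m [[] _]].
  - destruct (classic (upper_bound T le D y)) as [Hy|Hy].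
    + exists y. split; [left; auto|auto].
    + assert (H0 : exists d0, D d0 /\ ~ le d0 y).
      { apply NNPP; intro C. apply Hy. intros d Hd. apply NNPP; intro C2; apply C; eauto. }
      destruct H0 as [d0 [Hd0 Hnd0]].
      set (D' := fun d => D d /\ le d0 d).
      assert (HD' : directed T le D').
      { split. exists d0. split; auto. intros x z [Hx Hx0] [Hz Hz0].
        destruct (proj2 HD x z Hx Hz) as [w [Hw [H1 H2]]]. exists w. split; [split; eauto|auto]. }
      destruct (IH D' HD') as [m [Hm Hub]].
      { intros d [Hd Hd0']. destruct (H d Hd) as [m [[<-|Hm] Hdm]].
        exfalso; eauto. eauto. }
      exists m. split; [right; auto|]. intros d Hd.
      destruct (proj2 HD d d0 Hd Hd0) as [w [Hw [H1 H2]]]. apply trans with w; auto.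
      apply Hub. split; auto.
Qed.

Lemma maxabove (L : list T) : forall x, (exists l, In l L /\ le x l) ->
  exists m, In m L /\ le x m /\ forall y, In y L -> le m y -> y = m.
Proof.
  induction L as [|y L IH]; intros x [l [Hl Hxl]].
  - destruct Hl.
  - destruct (classic (exists l', In l' L /\ le x l')) as [Hex|Hn].
    + destruct (IH x Hex) as [m [Hm [Hxm Hmax]]].
      destruct (classic (le m y)) as [Hmy|Hmy].
      * exists y. split; [left; auto|]. split; [eauto|].
        intros z [<-|Hz] Hyz; auto. assert (z = m) by (apply Hmax; eauto). subst z.
        apply antisym; auto.
      * exists m. split; [right; auto|]. split; auto. intros z [<-|Hz] Hmz; [contradiction|auto].
    + destruct Hl as [<-|Hl]; [|exfalso; apply Hn; exists l; auto].
      exists y. split; [left; auto|]. split; auto. intros z [<-|Hz] Hlz; auto.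
      exfalso; apply Hn. exists z; eauto.
Qed.

Lemma main (E : T -> Prop) (Hd : downc E) :
  finite_set T (Max T le (Lub T le E)) /\
  (forall x, cl T le E x <-> down T le (Max T le (Lub T le E)) x).
Proof.
  destruct (all_good E Hd) as [L [HL HL']].
  assert (K1 : forall y, Lub T le E y -> exists l, In l L /\ le y l).
  { intros y [D [HDE [HD Hl]]]. destruct (HL' D HDE HD) as [l [Hl' Hub]].
    exists l. split; auto. apply (proj2 Hl). auto. }
  assert (K2 : forall y, Lub T le E y -> exists m, Max T le (Lub T le E) m /\ le y m).
  { intros y Hy. destruct (K1 y Hy) as [l [Hl Hyl]].
    destruct (maxabove L y (ex_intro _ l (conj Hl Hyl))) as [m [Hm [Hym Hmax]]].
    exists m. split; auto. split; auto. intros z Hz Hmz.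
    destruct (K1 z Hz) as [l' [Hl' Hzl']].
    assert (l' = m) by (apply Hmax; eauto). subst l'. apply antisym; auto. }
  assert (Fin : forall m, Max T le (Lub T le E) m -> In m L).
  { intros m [Hm Hmax]. destruct (K1 m Hm) as [l [Hl Hml]].
    rewrite <- (Hmax l (HL l Hl) Hml). auto. }
  split.
  - exists L. exact Fin.
  - intros x. split.
    + intros Hcl. apply Hcl.
      * split.
        -- intros u v Hnu Huv Hv. apply Hnu. destruct Hv as [m [Hm Hvm]]. exists m; eauto.
        -- intros D l HD Hl Hnl. apply NNPP; intro C.
           assert (HC : forall d, D d -> exists m, In m L /\ le d m).
           { intros d Hdd. assert (Hc : down T le (Max T le (Lub T le E)) d).
             { apply NNPP; intro C2. apply C; eauto. }
             destruct Hc as [m [Hm Hdm]]. exists m. split; auto. }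
           destruct (dir_ub L D HD HC) as [l' [Hl' Hub]].
           apply Hnl. destruct (K2 l' (HL l' Hl')) as [m [Hm Hlm]].
           exists m. split; auto. apply trans with l'; auto. apply (proj2 Hl); auto.
      * intros e He. apply K2. exists (fun y => y = e). split.
        { intros y ->; auto. }
        split. split. exists e; auto. intros u v -> ->. exists e. auto.
        split. intros d ->. auto. intros u Hu. apply Hu. auto.
    + intros [m [[[D [HDE [HD Hl]]] _] Hxm]] C HC HEC.
      assert (Cm : C m).
      { apply NNPP; intro Nm. destruct (proj2 HC D m HD Hl Nm) as [d [Hdd Hnd]].
        apply Hnd. apply HEC. auto. }
      apply NNPP; intro Nx. apply (proj1 HC x m Nx Hxm). auto.
Qed.

End Proof.

Theorem proposition3p7 (S : Type) (le : S -> S -> Prop) (F : list (S -> option S))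
  (HF : complete_wsts S le F) (s0 : S) :
  finite_set S (Clover S le F s0) /\
  (forall x, cl S le (Cover S le F s0) x <-> down S le (Clover S le F s0) x).
Proof.
  destruct HF as [[[Hr [Ha Ht]] [Hwf Hna]] [[Hdc _] _]].
  unfold Clover. apply (main S le Hr Ha Ht Hwf Hna Hdc).
  intros x y [p [Hp Hyp]] Hxy. exists p. split; auto. eapply Ht; eauto.
Qed.
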